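(* Let $d\ge 1$ and let $H=(V,E)$ be a $d$-regular graph, let $E'\subseteq E$, and let $v(e)\in\mathbb Z_2^d$ be assigned to each $e\in E'$. Suppose that for every vertex $u$, the vectors $v(e)$ over all edges $e\in E'$ incident with $u$ are linearly independent. Then one can assign a vector $v(e)\in\mathbb Z_2^d$ to every edge $e\in E\setminus E'$ so that for every vertex $u$, the $d$ vectors assigned to the $d$ edges incident with $u$ form a basis of $\mathbb Z_2^d$.
   Context: All graphs are finite and simple. *)

(* Defs.v *)
From mathcomp Require Import all_boot all_order all_algebra.
Set Implicit Arguments. Unset Strict Implicit. Unset Printing Implicit Defensive.

Definition simple_graph (V : finType) (adj : rel V) : Prop :=
  symmetric adj /\ irreflexive adj.

Definition edges (V : finType) (adj : rel V) : {set {set V}} :=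
  [set [set x; y] | x in V, y in V & adj x y].

Definition regular (V : finType) (adj : rel V) (d : nat) : Prop :=
  forall x : V, #|[set y | adj x y]| = d.

Definition incident (V : finType) (F : {set {set V}}) (u : V) : {set {set V}} :=
  [set f in F | u \in f].

(* Main.v *)
Require Import Defs.
From mathcomp Require Import all_boot all_order all_algebra.
From Stdlib Require Import Classical.
Import GRing.Theory.
Set Implicit Arguments. Unset Strict Implicit.

Lemma proper_vs (K : fieldType) (vT : vectType K) (U : {vspace vT}) :
  (\dim U < dim vT)%N -> exists c, c \notin U.
Proof.
move=> h; apply: NNPP => nc.
have: (fullv <= U)%VS.
  apply/subvP => x _; apply/negPn/negP => hx; apply: nc; by exists x.
by move/dimvS; rewrite dimvf leqNgt h.
Qed.

Arguments proper_vs {K vT U}.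
Lemma avoid2 (K : fieldType) (vT : vectType K) (U1 U2 : {vspace vT}) :
  (\dim U1 < dim vT)%N -> (\dim U2 < dim vT)%N ->
  exists a, (a \notin U1) && (a \notin U2).
Proof.
move=> h1 h2.
case: (boolP (U1 <= U2)%VS) => s12.
  have [a ha] := proper_vs h2; exists a; rewrite ha andbT.
  by apply/negP => /(subvP s12); apply/negP.
have [b [b1 b2]] : exists b, b \in U1 /\ b \notin U2.
  apply: NNPP => nb; move/negP: s12; apply; apply/subvP => x x1.
  apply/negPn/negP => x2; apply: nb; by exists x.
have [c hc] := proper_vs h1.
case: (boolP (c \in U2)) => c2; last by exists c; rewrite hc.
exists (b + c)%R; apply/andP; split.
  apply/negP => bc; move/negP: hc; apply.
  by rewrite -(addKr b c) memvD // memvN.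
apply/negP => bc; move/negP: b2; apply.
by rewrite -(addrK c b) memvB.
Qed.

Section G.
Variables (V : finType) (adj : rel V).

Lemma edgesP e : e \in edges adj -> exists x y, adj x y /\ e = [set x; y].
Proof. by case/imset2P => x y _; rewrite inE => h ->; exists x, y. Qed.

Lemma incident_card d : simple_graph adj -> regular adj d ->
  forall u, #|incident (edges adj) u| = d.
Proof.
move=> [sym irr] reg u.
have -> : incident (edges adj) u = [set [set u; y] | y in [set y | adj u y]].
  apply/setP => f; rewrite inE; apply/andP/imsetP.
    case=> /edgesP [x [y [hxy ->]]]; rewrite !inE => /orP [] /eqP ->.
      by exists y; rewrite // inE.
    by exists x; rewrite ?inE 1?sym // setUC.
  case=> y; rewrite inE => hy ->; split; last by rewrite !inE eqxx.
  by apply/imset2P; exists u y; rewrite // inE.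
rewrite card_in_imset; first by rewrite reg.
move=> y1 y2; rewrite !inE => h1 h2 e.
have : y1 \in [set u; y2] by rewrite -e !inE eqxx orbT.
rewrite !inE => /orP [] /eqP // yu.
by move: h1; rewrite -yu irr.
Qed.
End G.

Section Main.
Variables (d : nat) (V : finType) (adj : rel V).
Hypothesis Hg : simple_graph adj.
Hypothesis Hreg : regular adj d.

Definition P (F : {set {set V}}) (w : {set V} -> 'rV['F_2]_d) :=
  forall u, free [seq w f | f <- enum (incident F u)].

Lemma map_upd (F : {set {set V}}) e a (w : {set V} -> 'rV['F_2]_d) u :
  e \notin F ->
  [seq (if f == e then a else w f) | f <- enum (incident F u)] =
  [seq w f | f <- enum (incident F u)].
Proof.
move=> eF; apply/eq_in_map => f; rewrite mem_enum inE => /andP [fF _].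
by case: eqP => // fe; move: eF; rewrite -fe fF.
Qed.

Lemma step (F : {set {set V}}) (w : {set V} -> 'rV['F_2]_d) e : F \subset edges adj -> e \in edges adj -> e \notin F ->
  P F w -> exists a, P (e |: F) (fun f => if f == e then a else w f).
Proof.
move=> sF eE eF PF.
have [x [y [hxy ee]]] := edgesP eE.
have dimlt u : u \in e -> (\dim <<[seq w f | f <- enum (incident F u)]>> < dim 'rV['F_2]_d)%N.
  move=> ue; rewrite (eqP (PF u)) size_map -cardE dim_matrix mul1r.
  rewrite -(incident_card Hg Hreg u); apply: proper_card.
  apply/properP; split.
    by apply/subsetP => f; rewrite !inE => /andP [/(subsetP sF) -> ->].
  by exists e; rewrite !inE ?eE ?ue // (negbTE eF).
have [a /andP [ax ay]] := avoid2 (dimlt x ltac:(by rewrite ee !inE eqxx))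
                                 (dimlt y ltac:(by rewrite ee !inE eqxx orbT)).
exists a => u.
case: (boolP (u \in e)) => ue.
  have pe : perm_eq (enum (incident (e |: F) u)) (e :: enum (incident F u)).
    apply: uniq_perm; first exact: enum_uniq.
      by rewrite /= enum_uniq andbT mem_enum inE (negbTE eF).
    by move=> f; rewrite in_cons !mem_enum !inE; case: eqP => // ->; rewrite ue.
  rewrite (perm_free (perm_map _ pe)) /= eqxx map_upd // free_cons PF andbT.
  by move: ue; rewrite ee !inE => /orP [] /eqP ->.
have -> : incident (e |: F) u = incident F u.
  apply/setP => f; rewrite !inE; case: eqP => // ->.
  by rewrite (negbTE ue) !andbF.
by rewrite map_upd.
Qed.

Lemma extend n : forall (F : {set {set V}}) (w : {set V} -> 'rV['F_2]_d), F \subset edges adj -> P F w ->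
  #|edges adj :\: F| = n ->
  exists w', (forall f, f \in F -> w' f = w f) /\ P (edges adj) w'.
Proof.
elim: n => [|n IH] F w sF PF cn.
  have -> : edges adj = F.
    apply/eqP; rewrite eqEsubset; apply/andP; split => //.
    by apply/subsetP => f fE; move/eqP: cn; rewrite cards_eq0 => /eqP/setP/(_ f); rewrite !inE fE andbT => /negbFE.
  by exists w.
have [e] : exists e, e \in edges adj :\: F.
  by apply/set0Pn; rewrite -card_gt0 cn.
rewrite inE => /andP [eF eE].
have [a Pa] := step sF eE eF PF.
have sF' : e |: F \subset edges adj by rewrite subUset sub1set eE sF.
have cn' : #|edges adj :\: (e |: F)| = n.
  move: cn; rewrite (cardsD1 e) inE eF eE add1n => -[<-].
  apply: eq_card => f; rewrite !inE; case: eqP => // ->; rewrite eE ?andbF ?andbT.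
have [w' [h1 h2]] := IH _ _ sF' Pa cn'.
exists w'; split => // f fF; rewrite h1 ?inE ?fF ?orbT //.
by case: eqP => // fe; move: eF; rewrite -fe fF.
Qed.
End Main.

Theorem lemma2p2 (d : nat) (V : finType) (adj : rel V)
  (Hd : (1 <= d)%N) (Hg : simple_graph adj) (Hreg : regular adj d)
  (E' : {set {set V}}) (HE' : E' \subset edges adj)
  (v : {set V} -> 'rV['F_2]_d)
  (Hind : forall u : V, free [seq v f | f <- enum (incident E' u)]) :
  exists w : {set V} -> 'rV['F_2]_d,
    (forall f, f \in E' -> w f = v f) /\
    (forall u : V, basis_of fullv [seq w f | f <- enum (incident (edges adj) u)]).
Proof.
have [w [h1 h2]] := extend Hg Hreg HE' Hind erefl.
exists w; split => // u.
rewrite /basis_of h2 andbT eqEdim subvf /= dimvf dim_matrix mul1r.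
by rewrite (eqP (h2 u)) size_map -cardE (incident_card Hg Hreg).
Qed.
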